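(* $z_2(5,3)=9$.
   Context: Double Zarankiewicz number: consider configurations $G=([m],[n],E_1\cup E_2)$ where $[m]=\{1,\dots,m\}$, $E_1\subseteq[m]\times[n]$ is a set of 1-edges (cells) and $E_2$ is a set of 2-edges $(i,j;k,l)$ with $i,k\in[m]$, $j,l\in[n]$, $i\ne k$, $j\ne l$; the cells $(i,j)$ and $(k,l)$ are the two halves of this 2-edge. Simplicity condition: the halves of all 2-edges are pairwise distinct cells and none of them belongs to $E_1$. A cell is occupied if it lies in $E_1$ or is a half of some 2-edge. $G$ contains a generalized $C_4$-cycle if (1) there are four 1-edges $(i,j),(i,l),(k,j),(k,l)\in E_1$ with $i\ne k$, $j\ne l$; or (2) there is a 2-edge $(i,j;k,l)\in E_2$ whose two opposite cells $(i,l)$ and $(k,j)$ are both occupied; or (3) there are a 2-edge $(i,j;p,q)\in E_2$ and a cell $(k,l)$ such that the five cells $(k,l),(k,j),(k,q),(i,l),(p,l)$ are pairwise distinct and all occupied. $z_2(m,n)$ is the maximum of $|E_1|+|E_2|$ over all such $G$ satisfying the simplicity condition and containing no generalized $C_4$-cycle. *)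

(* Defs.v *)
(* Rows [m] are represented by 'I_m = {0,..,m-1},
   columns [n] by 'I_n. *)
From mathcomp Require Import all_boot all_order.
Set Implicit Arguments. Unset Strict Implicit. Unset Printing Implicit Defensive.

Section Zarankiewicz.
Variables m n : nat.

Definition cell := ('I_m * 'I_n)%type.

(* a 2-edge (i,j;k,l) is the ordered pair of its halves ((i,j),(k,l)) *)
Definition two_edge := (cell * cell)%type.

Definition is_two_edge (e : two_edge) : bool :=
  (e.1.1 != e.2.1) && (e.1.2 != e.2.2).

(* a configuration G = ([m],[n], E1 u E2) *)
Definition config := ({set cell} * {set two_edge})%type.

Definition halves (e : two_edge) : {set cell} := [set e.1; e.2].

Definition simple (G : config) : bool :=
  [forall e in G.2, is_two_edge e] &&
  [forall e in G.2, forall f in G.2,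
      (e != f) ==> [disjoint halves e & halves f]] &&
  [forall e in G.2, (e.1 \notin G.1) && (e.2 \notin G.1)].

Definition occupied (G : config) (c : cell) : bool :=
  (c \in G.1) || [exists e in G.2, (c == e.1) || (c == e.2)].

(* (1): four 1-edges forming a C4 *)
Definition c4_type1 (G : config) : bool :=
  [exists i : 'I_m, exists k : 'I_m, exists j : 'I_n, exists l : 'I_n,
     [&& i != k, j != l, (i, j) \in G.1, (i, l) \in G.1,
         (k, j) \in G.1 & (k, l) \in G.1]].

(* (2): a 2-edge (i,j;k,l) with (i,l) and (k,j) occupied *)
Definition c4_type2 (G : config) : bool :=
  [exists e in G.2,
     occupied G (e.1.1, e.2.2) && occupied G (e.2.1, e.1.2)].

(* (3): a 2-edge (i,j;p,q) and a cell (k,l) such that the five cells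
   (k,l),(k,j),(k,q),(i,l),(p,l) are pairwise distinct and occupied *)
Definition c4_type3 (G : config) : bool :=
  [exists e in G.2, exists c : cell,
     let i := e.1.1 in let j := e.1.2 in let p := e.2.1 in let q := e.2.2 in
     let k := c.1 in let l := c.2 in
     let s := [:: (k, l); (k, j); (k, q); (i, l); (p, l)] in
     uniq s && all (occupied G) s].

Definition has_gen_C4 (G : config) : bool :=
  [|| c4_type1 G, c4_type2 G | c4_type3 G].

Definition admissible (G : config) : bool := simple G && ~~ has_gen_C4 G.

Definition weight (G : config) : nat := #|G.1| + #|G.2|.

Definition z2 : nat := \max_(G : config | admissible G) weight G.

End Zarankiewicz.

(* Main.v *)
Require Import Defs.
From mathcomp Require Import all_boot all_order.
From mathcomp Require Import zify.
Set Implicit Arguments. Unset Strict Implicit. Unset Printing Implicit Defensive.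

Definition rowpats : seq (seq bool) :=
  [:: [:: true; true; true]; [:: true; true; false]; [:: true; false; true]; [:: true; false; false];
      [:: false; true; true]; [:: false; true; false]; [:: false; false; true]; [:: false; false; false]].
Fixpoint allL (T : Type) (f : T -> bool) (s : seq T) : bool :=
  if s is x :: s' then (if f x then allL f s' else false) else true.
Lemma allLE T (f : T -> bool) s : allL f s = all f s.
Proof. by elim: s => //= x s ->; case: (f x). Qed.
Notation "a ==>> b" := (if a then b else true) (at level 55, right associativity).
Notation "a &&& b" := (if a then b else false) (at level 54, right associativity).
Definition get (l : seq (seq bool)) i j := nth false (nth [::] l i) j.
Definition I5 := iota 0 5.
Definition I3 := iota 0 3.
Definition c4f l := allL (fun i => allL (fun k => (i < k) ==>> allL (fun j => allL (fun m => (j < m) ==>> ~~[&& get l i j, get l i m, get l k j & get l k m]) I3) I3) I5) I5.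
Definition cnt l := sumn (map (count id) l).
Definition rowempty l r := ~~ get l r 0 && ~~ get l r 1 && ~~ get l r 2.
Definition chkA l :=
  allL (fun r => allL (fun r' => (r != r') ==>> ~~ (rowempty l r && rowempty l r')) I5) I5 &&&
  allL (fun r => rowempty l r ==>> allL (fun r' => (r != r') ==>>
    allL (fun j1 => allL (fun j2 => [&& j1 != j2, ~~ get l r' j1 & ~~ get l r' j2] ==>>
      allL (fun pa => allL (fun pb => allL (fun s =>
        [&& pa != pb, pa != r, pa != r', pb != r, pb != r', ~~ get l pa s & ~~ get l pb s] ==>> false)
      I3) I5) I5) I3) I3) I5) I5.
Definition chkB l :=
  allL (fun r => ~~ rowempty l r) I5 &&&
  allL (fun i1 => allL (fun i2 => (i1 != i2) ==>>
   allL (fun a1 => allL (fun b1 => [&& a1 != b1, ~~ get l i1 a1 & ~~ get l i1 b1] ==>>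
   allL (fun a2 => allL (fun b2 => [&& a2 != b2, ~~ get l i2 a2 & ~~ get l i2 b2] ==>>
   allL (fun p => [&& p != i1 & p != i2] ==>> allL (fun s => ~~ get l p s ==>>
     allL (fun j => (j != s) ==>> get l p j) I3) I3) I5) I3) I3) I3) I3) I5) I5.
Definition all5 (f : seq (seq bool) -> bool) :=
  allL (fun r0 => allL (fun r1 => allL (fun r2 => allL (fun r3 => allL (fun r4 =>
    f [:: r0; r1; r2; r3; r4]) rowpats) rowpats) rowpats) rowpats) rowpats.
Definition chk l := c4f l ==>> (cnt l <= 8) &&& ((cnt l == 7) ==>> chkA l) &&& ((cnt l == 8) ==>> chkB l).
Lemma chk_all : all5 chk.
Proof. vm_compute. reflexivity. Qed.
Arguments allL : simpl never.
Arguments I5 : simpl never.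
Arguments I3 : simpl never.

Notation cellT := (cell 5 3).
Definition mkl (P : cellT -> bool) : seq (seq bool) :=
  [seq [seq P (inord i, inord j) | j <- I3] | i <- I5].

Lemma allL_in (T : eqType) (f : T -> bool) s x : allL f s -> x \in s -> f x.
Proof. by rewrite allLE => /allP; apply. Qed.
Lemma inI5 x : x < 5 -> x \in I5. Proof. by rewrite mem_iota. Qed.
Lemma inI3 x : x < 3 -> x \in I3. Proof. by rewrite mem_iota. Qed.

Lemma row_in a b c : [:: a; b; c] \in rowpats.
Proof. by case: a; case: b; case: c. Qed.

Lemma all5P f : all5 f -> forall r0 r1 r2 r3 r4, r0 \in rowpats -> r1 \in rowpats ->
  r2 \in rowpats -> r3 \in rowpats -> r4 \in rowpats -> f [:: r0; r1; r2; r3; r4].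
Proof.
move=> H r0 r1 r2 r3 r4 H0 H1 H2 H3 H4.
have {H} H := allL_in H H0; have {H} H := allL_in H H1; have {H} H := allL_in H H2.
have {H} H := allL_in H H3; exact: allL_in H H4.
Qed.

Lemma chk_mkl P : chk (mkl P).
Proof. by rewrite /mkl /=; apply: (all5P chk_all); apply: row_in. Qed.

Lemma getP' P i j : i < 5 -> j < 3 -> get (mkl P) i j = P (inord i, inord j).
Proof.
move=> Hi Hj; rewrite /get /mkl (nth_map 0) ?size_iota // (nth_map 0) ?size_iota //.
by rewrite !nth_iota.
Qed.
Lemma getP P (i : 'I_5) (j : 'I_3) : get (mkl P) i j = P (i, j).
Proof. by rewrite getP' // !inord_val. Qed.

Lemma card_sum (P : cellT -> bool) : #|P| = \sum_(i < 5) \sum_(j < 3) P (i, j).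
Proof.
rewrite -sum1_card.
rewrite (pair_big xpredT xpredT (fun (i : 'I_5) (j : 'I_3) => nat_of_bool (P (i,j)))) /=.
rewrite big_mkcond /=.
by apply: eq_bigr => -[i j] _ /=; rewrite unfold_in; case: (P _).
Qed.

Lemma cs (s : seq bool) : count id s = \sum_(x <- s) x.
Proof. by elim: s => [|x s IH]; rewrite ?big_nil ?big_cons //= IH. Qed.

Lemma cnt_mkl P : cnt (mkl P) = #|P|.
Proof.
rewrite card_sum /cnt /mkl.
have E : forall (F : 'I_5 -> nat), \sum_(i < 5) F i = \sum_(i <- I5) F (inord i).
  move=> F; rewrite (eq_bigr (fun i : 'I_5 => F (inord i))) => [|i _]; last by rewrite inord_val.
  by rewrite -(big_mkord xpredT (fun i => F (inord i))).
have E3 : forall (F : 'I_3 -> nat), \sum_(i < 3) F i = \sum_(i <- I3) F (inord i).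
  move=> F; rewrite (eq_bigr (fun i : 'I_3 => F (inord i))) => [|i _]; last by rewrite inord_val.
  by rewrite -(big_mkord xpredT (fun i => F (inord i))).
rewrite E; under eq_bigr do rewrite E3.
rewrite /I5 /I3 /= !big_cons !big_nil /=.
by [].
Qed.

Definition C4 (P : cellT -> bool) := forall (i k : 'I_5) (j m : 'I_3), i != k -> j != m ->
  ~~ [&& P (i, j), P (i, m), P (k, j) & P (k, m)].

Lemma allL_I n (f : nat -> bool) : (forall x, x < n -> f x) -> allL f (iota 0 n).
Proof. by move=> H; rewrite allLE; apply/allP => x; rewrite mem_iota => /andP[_]; apply: H. Qed.
Lemma allL_Iin n (f : nat -> bool) x : allL f (iota 0 n) -> x < n -> f x.
Proof. by move=> H Hx; apply: (allL_in H); rewrite mem_iota. Qed.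

Lemma c4f_mkl P : C4 P -> c4f (mkl P).
Proof.
move=> HC; rewrite /c4f /I5 /I3.
apply: allL_I => i Hi; apply: allL_I => k Hk; case: ifP => // Hik.
apply: allL_I => j Hj; apply: allL_I => m Hm; case: ifP => // Hjm.
rewrite !getP' //; apply: HC; rewrite -val_eqE /= !inordK //; lia.
Qed.

Lemma chkP P : C4 P -> [&& #|P| <= 8, (#|P| == 7) ==> chkA (mkl P) & (#|P| == 8) ==> chkB (mkl P)].
Proof.
move=> HC; have := chk_mkl P; rewrite /chk c4f_mkl // cnt_mkl.
by case: (#|P| <= 8) => //=; case: (#|P| == 7) => //=; case: (chkA _) => //=; case: (#|P| == 8).
Qed.

Lemma E8 P : C4 P -> #|P| <= 8.
Proof. by move/chkP => /and3P[]. Qed.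

Lemma ord3_0 : (0 < 3). Proof. by []. Qed.

Lemma A1 P : C4 P -> #|P| = 7 -> forall r r' : 'I_5, r != r' ->
  (forall j, ~~ P (r, j)) -> (forall j, ~~ P (r', j)) -> False.
Proof.
move=> HC Hc r r' Hrr' Hr Hr'; move/chkP: HC => /and3P[_ +]; rewrite Hc eqxx implyTb /chkA.
case: ifP => // H1 _.
have := allL_Iin (allL_Iin H1 (ltn_ord r)) (ltn_ord r').
rewrite val_eqE Hrr' /rowempty !getP' ?ltn_ord // !inord_val.
by rewrite (negbTE (Hr _)) (negbTE (Hr _)) (negbTE (Hr _)) (negbTE (Hr' _)) (negbTE (Hr' _)) (negbTE (Hr' _)).
Qed.

Lemma A2 P : C4 P -> #|P| = 7 -> forall (r r' pa pb : 'I_5) (s j1 j2 : 'I_3),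
  pa != pb -> pa != r -> pa != r' -> pb != r -> pb != r' -> r != r' -> j1 != j2 ->
  (forall j, ~~ P (r, j)) -> ~~ P (r', j1) -> ~~ P (r', j2) -> ~~ P (pa, s) -> ~~ P (pb, s) -> False.
Proof.
move=> HC Hc r r' pa pb s j1 j2 H1 H2 H3 H4 H5 H6 H7 Hr Q1 Q2 Q3 Q4.
move/chkP: HC => /and3P[_ +]; rewrite Hc eqxx implyTb /chkA.
case: ifP => // _ H.
have := allL_Iin H (ltn_ord r).
rewrite /rowempty !getP' ?ltn_ord // !inord_val.
rewrite (negbTE (Hr _)) (negbTE (Hr _)) (negbTE (Hr _)) /= => {}H.
have := allL_Iin H (ltn_ord r'); rewrite val_eqE H6 => {}H.
have := allL_Iin (allL_Iin H (ltn_ord j1)) (ltn_ord j2).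
rewrite val_eqE H7 !getP ?Q1 ?Q2 /= => {}H.
have := allL_Iin (allL_Iin (allL_Iin H (ltn_ord pa)) (ltn_ord pb)) (ltn_ord s).
by rewrite !val_eqE H1 H2 H3 H4 H5 !getP Q3 Q4.
Qed.

Lemma B1 P : C4 P -> #|P| = 8 -> forall r : 'I_5, exists j, P (r, j).
Proof.
move=> HC Hc r; move/chkP: HC => /and3P[_ _ +]; rewrite Hc eqxx implyTb /chkB.
case: ifP => // H _.
have := allL_Iin H (ltn_ord r).
rewrite /rowempty !getP' ?ltn_ord // !inord_val.
case E0: (P (r, inord 0)); first by exists (inord 0).
case E1: (P (r, inord 1)); first by exists (inord 1).
case E2: (P (r, inord 2)); first by exists (inord 2).
by [].
Qed.

Lemma B23 P : C4 P -> #|P| = 8 -> forall (i1 i2 p : 'I_5) (a1 b1 a2 b2 s j : 'I_3),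
  i1 != i2 -> a1 != b1 -> ~~ P (i1, a1) -> ~~ P (i1, b1) ->
  a2 != b2 -> ~~ P (i2, a2) -> ~~ P (i2, b2) ->
  p != i1 -> p != i2 -> ~~ P (p, s) -> j != s -> P (p, j).
Proof.
move=> HC Hc i1 i2 p a1 b1 a2 b2 s j H1 H2 Q1 Q2 H3 Q3 Q4 H4 H5 Q5 H6.
move/chkP: HC => /and3P[_ _ +]; rewrite Hc eqxx implyTb /chkB.
case: ifP => // _ H.
have := allL_Iin (allL_Iin H (ltn_ord i1)) (ltn_ord i2); rewrite val_eqE H1 => {}H.
have := allL_Iin (allL_Iin H (ltn_ord a1)) (ltn_ord b1); rewrite val_eqE H2 !getP Q1 Q2 => {}H.
have := allL_Iin (allL_Iin H (ltn_ord a2)) (ltn_ord b2); rewrite val_eqE H3 !getP Q3 Q4 => {}H.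
have := allL_Iin H (ltn_ord p); rewrite !val_eqE H4 H5 => {}H.
have := allL_Iin H (ltn_ord s); rewrite !getP Q5 => {}H.
by have := allL_Iin H (ltn_ord j); rewrite val_eqE H6 getP.
Qed.

Lemma pair_eq2 (x y : cellT) : x.1 = y.1 -> x.2 = y.2 -> x = y.
Proof. by case: x y => [? ?] [? ?] /= -> ->. Qed.

Lemma cover3b (a b c x : 'I_3) : a != b -> a != c -> b != c -> [|| x == a, x == b | x == c].
Proof. rewrite -!val_eqE; case: a b c x => [a Ha] [b Hb] [c Hc] [x Hx] /=. lia. Qed.

Lemma cover3 (a b c x : 'I_3) : a != b -> a != c -> b != c -> [\/ x = a, x = b | x = c].
Proof.
move=> H1 H2 H3; have := cover3b x H1 H2 H3.
by case/or3P => /eqP ->; [constructor 1 | constructor 2 | constructor 3].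
Qed.

Lemma uniq5 (k i p : 'I_5) (l j q : 'I_3) : k != i -> k != p -> i != p -> l != j -> l != q -> j != q ->
  uniq [:: (k, l); (k, j); (k, q); (i, l); (p, l)].
Proof.
move=> ki kp ip lj lq jq.
rewrite /= !in_cons !xpair_eqE !in_nil !eqxx /=.
rewrite (negbTE ki) (negbTE kp) (negbTE ip) (negbTE lj) (negbTE lq) (negbTE jq).
by [].
Qed.

Section Main.
Variable G : config 5 3.
Hypothesis adm : admissible G.
Local Notation E := G.1.
Local Notation T := G.2.
Local Notation occ := (occupied G).

Lemma adm_parts : [/\ forall t, t \in T -> is_two_edge t,
   forall t t', t \in T -> t' \in T -> t != t' -> [disjoint halves t & halves t'],
   forall t, t \in T -> (t.1 \notin E) && (t.2 \notin E) &
   [/\ ~~ c4_type1 G, ~~ c4_type2 G & ~~ c4_type3 G]].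
Proof.
move: adm; rewrite /admissible /simple /has_gen_C4 => /andP[/andP[/andP[H1 H2] H3]].
rewrite !negb_or => /and3P[N1 N2 N3]; split => //.
- by move=> t /(forall_inP H1).
- by move=> t t' tT t'T; move/forall_inP: H2 => /(_ t tT) /forall_inP /(_ t' t'T) /implyP.
- by move=> t /(forall_inP H3).
Qed.

Lemma te t : t \in T -> (t.1.1 != t.2.1) && (t.1.2 != t.2.2).
Proof. by case: adm_parts => H _ _ _ /H. Qed.

Lemma same_t t t' (c : cellT) : t \in T -> t' \in T ->
  (c == t.1) || (c == t.2) -> (c == t'.1) || (c == t'.2) -> t = t'.
Proof.
move=> tT t'T c1 c2; case: (eqVneq t t') => // ne.
case: adm_parts => _ H _ _; have D := H t t' tT t'T ne.
have : c \in halves t by rewrite /halves in_set2.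
by move/(disjointFr D); rewrite /halves in_set2 c2.
Qed.

Lemma notE t : t \in T -> (t.1 \notin E) && (t.2 \notin E).
Proof. by case: adm_parts => _ _ H _ /H. Qed.

Lemma occE c : c \in E -> occ c.
Proof. by rewrite /occupied => ->. Qed.

Lemma occ12 t : t \in T -> occ t.1 && occ t.2.
Proof.
move=> tT; rewrite /occupied; apply/andP; split; apply/orP; right; apply/exists_inP; exists t => //;
by rewrite eqxx ?orbT.
Qed.

Lemma type2 t : t \in T -> ~~ (occ (t.1.1, t.2.2) && occ (t.2.1, t.1.2)).
Proof.
move=> tT; apply/negP => H; case: adm_parts => _ _ _ [_ /negP N2 _]; apply: N2.
by apply/exists_inP; exists t.
Qed.

Lemma type3 t : t \in T -> forall k l,
  ~~ (uniq [:: (k,l); (k,t.1.2); (k,t.2.2); (t.1.1,l); (t.2.1,l)] &&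
      all occ [:: (k,l); (k,t.1.2); (k,t.2.2); (t.1.1,l); (t.2.1,l)]).
Proof.
move=> tT k l; apply/negP => H; case: adm_parts => _ _ _ [_ _ /negP N3]; apply: N3.
by apply/exists_inP; exists t => //; apply/existsP; exists (k, l).
Qed.

Lemma C4E : C4 (fun c => c \in E).
Proof.
move=> i k j m ik jm; apply/negP => H; case: adm_parts => _ _ _ [/negP N1 _ _]; apply: N1.
apply/existsP; exists i; apply/existsP; exists k; apply/existsP; exists j; apply/existsP; exists m.
by rewrite ik jm.
Qed.

Lemma cardE8 : #|E| = #|(fun c => c \in E)|.
Proof. by apply: eq_card. Qed.

Definition hh t : cellT := if occ (t.1.1, t.2.2) then t.2 else t.1.
Definition gg t : cellT := if occ (t.1.1, t.2.2) then t.1 else t.2.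
Definition zz t : cellT := ((hh t).1, (gg t).2).

Lemma hg t : t \in T -> [/\ ~~ occ (zz t), (hh t).1 != (gg t).1, (hh t).2 != (gg t).2 &
  [/\ occ (hh t), occ (gg t), hh t \notin E & gg t \notin E]].
Proof.
move=> tT; have /andP[d1 d2] := te tT; have /andP[o1 o2] := occ12 tT.
have /andP[n1 n2] := notE tT; have T2 := type2 tT.
rewrite /zz /hh /gg; case: ifP => O.
- by rewrite O /= in T2; split; rewrite // eq_sym.
- by split; rewrite // O.
Qed.

Lemma hh_half t : (hh t == t.1) || (hh t == t.2).
Proof. by rewrite /hh; case: ifP; rewrite eqxx ?orbT. Qed.
Lemma gg_half t : (gg t == t.1) || (gg t == t.2).
Proof. by rewrite /gg; case: ifP; rewrite eqxx ?orbT. Qed.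

Lemma perm5 (a b c d e : cellT) : perm_eq [:: a; b; c; d; e] [:: a; c; b; e; d].
Proof.
rewrite perm_cons.
have P1 : perm_eq [:: b; c] [:: c; b] by apply/permPl; exact: (perm_catC [:: b] [:: c]).
have P2 : perm_eq [:: d; e] [:: e; d] by apply/permPl; exact: (perm_catC [:: d] [:: e]).
exact: (perm_cat P1 P2).
Qed.

Lemma hg_t3 t : t \in T -> forall k l,
  ~~ (uniq [:: (k,l); (k,(hh t).2); (k,(gg t).2); ((hh t).1,l); ((gg t).1,l)] &&
      all occ [:: (k,l); (k,(hh t).2); (k,(gg t).2); ((hh t).1,l); ((gg t).1,l)]).
Proof.
move=> tT k l; have := type3 tT k l; rewrite /hh /gg; case: ifP => // _.
by rewrite (perm_uniq (perm5 _ _ _ _ _)) (perm_all _ (perm5 _ _ _ _ _)).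
Qed.

Definition Hs : {set cellT} := [set c | [exists t in T, (c == t.1) || (c == t.2)]].
Definition Zs : {set cellT} := [set c | ~~ occ c].

Definition sel (b : two_edge 5 3 * bool) : cellT := if b.2 then b.1.1 else b.1.2.

Lemma cardH : #|Hs| = 2 * #|T|.
Proof.
have -> : Hs = [set sel b | b in setX T [set: bool]].
  apply/setP => c; rewrite inE; apply/exists_inP/imsetP.
  - case=> t tT /orP[] /eqP ->; [exists (t, true) | exists (t, false)] => //;
    by rewrite in_setX tT in_setT.
  - by case=> -[t b] /setXP[tT _] ->; exists t => //; case: b; rewrite /sel /= eqxx ?orbT.
rewrite card_in_imset ?cardsX ?cardsT ?card_bool; first by rewrite mulnC.
move=> [t b] [t' b'] /setXP[tT _] /setXP[t'T _]; rewrite /sel /= => eq.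
have tt' : t = t'.
  apply: (same_t (c := if b then t.1 else t.2)) => //; first by case: b {eq}; rewrite eqxx ?orbT.
  by rewrite eq; case: b' {eq}; rewrite eqxx ?orbT.
subst t'; have /andP[d1 _] := te tT.
by case: b b' eq => -[] //= E'; move: d1; rewrite E' eqxx.
Qed.

Lemma count15 : #|E| + 2 * #|T| + #|Zs| = 15.
Proof.
have ZC : Zs = ~: (E :|: Hs).
  by apply/setP => c; rewrite !inE /occupied.
have cC := cardsC (E :|: Hs); rewrite -ZC card_prod !card_ord /= in cC.
have EH : E :&: Hs = set0.
  apply/setP => c; rewrite in_setI in_set0 /Hs inE; apply/negbTE/negP => /andP[cE /exists_inP[t tT /orP[]/eqP ct]].
  - by have /andP[] := notE tT; rewrite -ct cE.
  - by have /andP[] := notE tT; rewrite -ct cE.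
have cU := cardsU E Hs; rewrite EH cards0 subn0 in cU.
by rewrite -cardH -cU cC.
Qed.

Lemma hh_inj t t' : t \in T -> t' \in T -> hh t = hh t' -> t = t'.
Proof. move=> tT t'T e; apply: (same_t (c := hh t)) => //; [exact: hh_half | rewrite e; exact: hh_half]. Qed.
Lemma gg_inj t t' : t \in T -> t' \in T -> gg t = gg t' -> t = t'.
Proof. move=> tT t'T e; apply: (same_t (c := gg t)) => //; [exact: gg_half | rewrite e; exact: gg_half]. Qed.
Lemma gh_inj t t' : t \in T -> t' \in T -> gg t = hh t' -> t = t'.
Proof. move=> tT t'T e; apply: (same_t (c := gg t)) => //; [exact: gg_half | rewrite e; exact: hh_half]. Qed.

Lemma hh_col ta tb : ta \in T -> tb \in T -> ta != tb -> (hh ta).1 = (hh tb).1 -> (hh ta).2 != (hh tb).2.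
Proof.
move=> aT bT ab e1; apply/negP => /eqP e2; move/negP: ab; apply; apply/eqP.
by apply: hh_inj => //; apply: pair_eq2.
Qed.
Lemma gg_row ta tb : ta \in T -> tb \in T -> ta != tb -> (gg ta).2 = (gg tb).2 -> (gg ta).1 != (gg tb).1.
Proof.
move=> aT bT ab e2; apply/negP => /eqP e1; move/negP: ab; apply; apply/eqP.
by apply: gg_inj => //; apply: pair_eq2.
Qed.

Lemma K1 ta tb tc : ta \in T -> tb \in T -> tc \in T -> ta != tb ->
  zz ta = zz tb -> zz tc = zz ta -> tc = ta \/ tc = tb.
Proof.
move=> aT bT cT ab zab zca.
have [_ ra ca _] := hg aT; have [_ rb cb _] := hg bT; have [_ rc cc _] := hg cT.
move: zab zca; rewrite /zz => -[r_ab s_ab] [r_ca s_ca].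
have hab := hh_col aT bT ab r_ab.
have cb' : (hh tb).2 != (gg ta).2 by rewrite s_ab.
have [] := cover3 (hh tc).2 hab ca cb' => e.
- by left; apply: hh_inj => //; apply: pair_eq2.
- by right; apply: hh_inj => //; apply: pair_eq2; rewrite // r_ca.
- by move: cc; rewrite e s_ca eqxx.
Qed.

Lemma C4E7 : #|E| = 7 -> #|(fun c => c \in E)| = 7.
Proof. by rewrite cardE8. Qed.
Lemma C4E8 : #|E| = 8 -> #|(fun c => c \in E)| = 8.
Proof. by rewrite cardE8. Qed.

Lemma notE_of_nocc c : ~~ occ c -> c \notin E.
Proof. by apply: contra; apply: occE. Qed.

Lemma caseA ta tb tc : ta \in T -> tb \in T -> tc \in T -> ta != tb -> tc != ta -> tc != tb ->
  zz ta = zz tb -> #|E| = 7 -> False.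
Proof.
move=> aT bT cT ab ca cb zab E7.
have [za ra sa [oha oga nha nga]] := hg aT.
have [zb rb sb [ohb ogb nhb ngb]] := hg bT.
have [zc rc sc [ohc ogc nhc ngc]] := hg cT.
have zca : zz tc != zz ta.
  apply/eqP => e; have [] := K1 aT bT cT ab zab e => /eqP; by rewrite ?(negbTE ca) ?(negbTE cb).
move: (zab); rewrite /zz => -[r_ab s_ab].
have hab := hh_col aT bT ab r_ab.
have cb' : (hh tb).2 != (gg ta).2 by rewrite s_ab.
have rowr : forall j, ((hh ta).1, j) \notin E.
  move=> j; have [] := cover3 j hab sa cb' => ->.
  - by rewrite -surjective_pairing.
  - by rewrite r_ab -surjective_pairing.
  - exact: notE_of_nocc.
have rr' : (hh tc).1 != (hh ta).1.
  apply/eqP => e.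
  have s's : (gg tc).2 != (gg ta).2.
    by apply/eqP => e2; move/eqP: zca; apply; rewrite /zz e e2.
  have [] := cover3 (gg tc).2 hab sa cb' => e3.
  - by move/negP: zc; apply; rewrite /zz e e3 -surjective_pairing.
  - by move/negP: zc; apply; rewrite /zz e r_ab e3 -surjective_pairing.
  - by move/eqP: s's.
have key : forall t, t \in T -> t != tc -> (gg t).2 = (gg ta).2 -> (gg t).1 != (hh tc).1.
  move=> t tT ntc gs; have [zt rt st [oht ogt nht ngt]] := hg tT.
  apply/eqP => e.
  apply: (A1 C4E (C4E7 E7) (r := (hh ta).1) (r' := (hh tc).1)); first by rewrite eq_sym.
    exact: rowr.
  move=> j /=.
  have s_s' : (gg t).2 != (gg tc).2.
    by apply/eqP => e2; move/negP: zc; apply; rewrite /zz -e -e2 -surjective_pairing.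
  have s_jc : (gg t).2 != (hh tc).2.
    by apply/eqP => e2; move/eqP: ntc; apply; apply: gh_inj => //; apply: pair_eq2.
  have sc' : (gg tc).2 != (hh tc).2 by rewrite eq_sym.
  have [] := cover3 j s_s' s_jc sc' => ->.
  - by rewrite -e -surjective_pairing.
  - exact: notE_of_nocc.
  - by rewrite -surjective_pairing.
apply: (A2 C4E (C4E7 E7) (r := (hh ta).1) (r' := (hh tc).1) (pa := (gg ta).1) (pb := (gg tb).1)
   (s := (gg ta).2) (j1 := (gg tc).2) (j2 := (hh tc).2)).
- exact: gg_row aT bT ab s_ab.
- by rewrite eq_sym.
- by apply: key => //; rewrite eq_sym.
- by rewrite r_ab eq_sym.
- by apply: key => //; rewrite eq_sym.
- by rewrite eq_sym.
- by rewrite eq_sym.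
- exact: rowr.
- exact: notE_of_nocc.
- by rewrite /= -surjective_pairing.
- by rewrite /= -surjective_pairing.
- by rewrite /= s_ab -surjective_pairing.
Qed.

Lemma Bl t : t \in T -> #|E| = 8 -> exists l, [/\ ((hh t).1, l) \in E, l != (hh t).2 & l != (gg t).2].
Proof.
move=> tT E8'; have [l Hl] := B1 C4E (C4E8 E8') (hh t).1.
have [zt rt st [oht ogt nht ngt]] := hg tT.
exists l; split => //.
- by apply/eqP => e; move: Hl; rewrite /= e -surjective_pairing (negbTE nht).
- by apply/eqP => e; move: Hl; rewrite /= e => /occE; apply/negP.
Qed.

Lemma Bp t t' : t \in T -> t' \in T -> t != t' -> #|E| = 8 -> (gg t).1 != (hh t').1.
Proof.
move=> tT t'T tt' E8'; apply/eqP => e.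
have [l' [Hl' l'j l'q]] := Bl t'T E8'.
have [zt rt st [oht ogt nht ngt]] := hg tT.
have [zt' rt' st' [oht' ogt' nht' ngt']] := hg t'T.
have [] := cover3 (gg t).2 st' (_ : (hh t').2 != l') (_ : (gg t').2 != l'); rewrite 1?eq_sym // => e2.
- by move/eqP: tt'; apply; apply: gh_inj => //; apply: pair_eq2.
- by move/negP: zt'; apply; rewrite /zz -e -e2 -surjective_pairing.
- by move: Hl'; rewrite -e -e2 -surjective_pairing (negbTE ngt).
Qed.

Lemma Bi t t' : t \in T -> t' \in T -> t != t' -> #|E| = 8 -> (hh t).1 != (hh t').1.
Proof.
move=> tT t'T tt' E8'; apply/eqP => e.
have [l [Hl lj lq]] := Bl tT E8'.
have [zt rt st [oht ogt nht ngt]] := hg tT.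
have [zt' rt' st' [oht' ogt' nht' ngt']] := hg t'T.
have hc := hh_col tT t'T tt' e.
have h'g : (gg t).2 != (hh t').2.
  by apply/eqP => e2; move/negP: zt; apply; rewrite /zz e e2 -surjective_pairing.
have [] := cover3 l st hc h'g => e2.
- by move/eqP: lj.
- by move/eqP: lq.
- by move: Hl; rewrite e e2 -surjective_pairing (negbTE nht').
Qed.

Lemma Bfull t t' : t \in T -> t' \in T -> t != t' -> #|E| = 8 ->
  forall j, j != (gg t).2 -> ((gg t).1, j) \in E.
Proof.
move=> tT t'T tt' E8' j js.
have [zt rt st [oht ogt nht ngt]] := hg tT.
have [zt' rt' st' [oht' ogt' nht' ngt']] := hg t'T.
apply: (B23 C4E (C4E8 E8') (i1 := (hh t).1) (i2 := (hh t').1) (a1 := (hh t).2) (b1 := (gg t).2)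
  (a2 := (hh t').2) (b2 := (gg t').2) (s := (gg t).2)) => //=.
- exact: Bi.
- by rewrite -surjective_pairing.
- exact: notE_of_nocc.
- by rewrite -surjective_pairing.
- exact: notE_of_nocc.
- by rewrite eq_sym.
- exact: Bp.
- by rewrite -surjective_pairing.
Qed.

Lemma Bocc t t' : t \in T -> t' \in T -> t != t' -> #|E| = 8 -> forall j, occ ((gg t).1, j).
Proof.
move=> tT t'T tt' E8' j; have [zt rt st [oht ogt nht ngt]] := hg tT.
case: (eqVneq j (gg t).2) => [->|js]; first by rewrite -surjective_pairing.
by apply: occE; apply: Bfull t'T tt' E8' j js.
Qed.

Lemma Bpp t t' : t \in T -> t' \in T -> t != t' -> #|E| = 8 -> (gg t).1 != (gg t').1.
Proof.
move=> tT t'T tt' E8'; apply/eqP => e.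
have [zt' rt' st' [oht' ogt' nht' ngt']] := hg t'T.
have g2 : (gg t').2 != (gg t).2.
  by apply/eqP => e2; move/eqP: tt'; apply; apply: gg_inj => //; apply: pair_eq2.
by have := Bfull tT t'T tt' E8' g2; rewrite e -surjective_pairing (negbTE ngt').
Qed.

Lemma caseB t1 t2 : t1 \in T -> t2 \in T -> t1 != t2 -> #|E| = 8 -> False.
Proof.
move=> aT bT ab E8'.
have ba : t2 != t1 by rewrite eq_sym.
have [l [Hl lj lq]] := Bl aT E8'.
have [z1 r1 s1 _] := hg aT.
have := hg_t3 aT (gg t2).1 l; rewrite uniq5 //=.
- by rewrite !(Bocc bT aT ba E8') (occE Hl) (occE (Bfull aT bT ab E8' lq)).
- exact: Bp.
- exact: Bpp.
Qed.

Lemma weight_le9 : weight G <= 9.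
Proof.
rewrite /weight leqNgt; apply/negP => Hw.
have c15 := count15.
have e8 : #|E| <= 8 by rewrite cardE8; apply: E8 C4E.
have [t0 t0T] : exists t, t \in T.
  by apply/card_gt0P; lia.
have e1 : 0 < #|Zs|.
  by apply/card_gt0P; exists (zz t0); rewrite inE; case: (hg t0T).
have zin : forall t, t \in T -> zz t \in Zs by move=> t tT; rewrite inE; case: (hg tT).
have : (#|Zs| = 1 /\ 2 < #|T|) \/ (#|Zs| = 2 /\ 2 < #|T| /\ #|E| = 7) \/ (1 < #|T| /\ #|E| = 8) by lia.
case=> [[/eqP/cards1P[z0 Z1] /card_gt2P[x [y [z [[xT yT zT] [xy yz zx]]]]]]
       | [[/eqP/cards2P[z1 [z2 [z12 Z2]]] [/card_gt2P[x [y [z [[xT yT zT] [xy yz zx]]]]] E7]]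
       | [/card_gt1P[x [y [xT yT xy]]] E8']]].
- have zx' := zin x xT; have zy' := zin y yT; have zz' := zin z zT.
  rewrite Z1 !in_set1 in zx' zy' zz'.
  have [] := K1 xT yT zT xy (etrans (eqP zx') (esym (eqP zy'))) (etrans (eqP zz') (esym (eqP zx'))) => e.
  + by move/eqP: zx; apply.
  + by move/eqP: yz; apply; rewrite e.
- have zx' := zin x xT; have zy' := zin y yT; have zz' := zin z zT.
  rewrite Z2 !in_set2 in zx' zy' zz'.
  have : [\/ zz x = zz y, zz x = zz z | zz y = zz z].
    by move: zx' zy' zz' => /orP[]/eqP-> /orP[]/eqP-> /orP[]/eqP->;
      rewrite ?eqxx; (try by constructor 1); (try by constructor 2); constructor 3.
  case=> e.
  + by apply: (caseA xT yT zT xy _ _ e E7); rewrite // eq_sym.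
  + by apply: (caseA xT zT yT _ _ _ e E7); rewrite // eq_sym.
  + by apply: (caseA yT zT xT yz _ _ e E7); rewrite // eq_sym.
- exact: (caseB xT yT xy E8').
Qed.

End Main.

Lemma C4_of_c4f P : c4f (mkl P) -> C4 P.
Proof.
move=> H.
have main : forall (i k : 'I_5) (j m : 'I_3), i < k -> j < m ->
    ~~ [&& P (i, j), P (i, m), P (k, j) & P (k, m)].
  move=> i k j m ik jm.
  have := allL_Iin (allL_Iin H (ltn_ord i)) (ltn_ord k); rewrite ik => {}H.
  have := allL_Iin (allL_Iin H (ltn_ord j)) (ltn_ord m); rewrite jm.
  by rewrite !getP.
have main2 : forall (i k : 'I_5) (j m : 'I_3), i < k -> j != m ->
    ~~ [&& P (i, j), P (i, m), P (k, j) & P (k, m)].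
  move=> i k j m ik; rewrite neq_ltn => /orP[] jm; first exact: main.
  apply: contra (main i k m j ik jm) => /and4P[a b c d]; by apply/and4P.
move=> i k j m; rewrite neq_ltn => /orP[] ik jm; first exact: main2.
apply: contra (main2 k i j m ik jm) => /and4P[a b c d]; by apply/and4P.
Qed.

Definition P0 (i j : nat) : bool :=
  [|| (i == 0) && (j != 0), (i == 1) && (j != 2), (i == 2) && (j != 1), (i == 3) && (j == 0)
    | (i == 4) && (j == 2)].
Definition E0 : {set cellT} := [set c : cellT | P0 c.1 c.2].
Definition e0 : two_edge 5 3 := ((@Ordinal 5 0 isT, @Ordinal 3 0 isT), (@Ordinal 5 4 isT, @Ordinal 3 1 isT)).
Definition G0 : config 5 3 := (E0, [set e0]).

Lemma exists_set1 (T : finType) (a : T) (Q : pred T) : [exists x in [set a], Q x] = Q a.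
Proof.
apply/exists_inP/idP => [[x /set1P -> //]|H]; by exists a; rewrite ?set11.
Qed.
Lemma forall_set1 (T : finType) (a : T) (Q : pred T) : [forall x in [set a], Q x] = Q a.
Proof.
apply/forall_inP/idP => [H|H x /set1P -> //]; exact: H (set11 a).
Qed.

Lemma occ0 : occupied G0 =1 (fun c : cellT => P0 c.1 c.2 || (c == e0.1) || (c == e0.2)).
Proof. by move=> c; rewrite /occupied /= exists_set1 /E0 inE orbA. Qed.

Lemma mkl_E0 : mkl (fun c => c \in E0) = [seq [seq P0 i j | j <- I3] | i <- I5].
Proof. by rewrite /mkl /E0 /= !inE /= !inordK. Qed.

Lemma adm0 : admissible G0.
Proof.
rewrite /admissible /simple /has_gen_C4 /=.
rewrite !forall_set1 /= /E0 !inE /=.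
rewrite !negb_or; apply/and3P; split.
- rewrite /c4_type1; apply/negP => /existsP[i /existsP[k /existsP[j /existsP[l /and3P[ik jl H]]]]].
  have HC : C4 (fun c => c \in E0) by apply: C4_of_c4f; rewrite mkl_E0; vm_compute.
  by move/negP: (HC i k j l ik jl) => HN; exact: HN H.
- by rewrite /c4_type2 exists_set1 !occ0.
- rewrite /c4_type3; apply/negP; rewrite exists_set1 => /existsP[[[i Hi] [j Hj]]].
  rewrite (eq_all occ0).
  by case: i Hi => [|[|[|[|[|i]]]]] Hi //; case: j Hj => [|[|[|j]]] Hj //; vm_compute.
Qed.

Lemma weight0 : weight G0 = 9.
Proof.
rewrite /weight /= cards1 -cnt_mkl mkl_E0.
by vm_compute.
Qed.

Theorem theorem4p3 : z2 5 3 = 9.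
Proof.
apply/eqP; rewrite eqn_leq; apply/andP; split.
- by apply/bigmax_leqP => G adm; apply: weight_le9.
- by rewrite -weight0 /z2; apply: leq_bigmax_cond; exact: adm0.
Qed.
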